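(* Let $(V,b,\mu)$ be a locally finite, weighted, connected graph with $\mu(x)\geq\mu_0$ for all $x\in V$, for some constant $\mu_0>0$, and let $\theta$ be a phase function on it. Fix $x_0\in V$ and, for $n\in\mathbb{Z}_+$, let $\beta_n=\frac{d_{2n}p_{2n}}{\mu_0 n}$ and let $\chi_n$ be the cut-off function defined below. Then for every $u\in\ell^2(V,\mu)$, $$\|P_{\chi_n}[u]\|\leq 2\beta_n\|u\|\qquad\text{and}\qquad \|u\,\Delta\chi_n\|\leq\beta_n\|u\|.$$
   Context: $V$ is a countably infinite set, $\mu\colon V\to(0,\infty)$, and $b\colon V\times V\to[0,\infty)$ satisfies $b(x,y)=b(y,x)$, $b(x,x)=0$, $\deg(x):=\#\{y: b(x,y)>0\}<\infty$; $x\sim y$ means $b(x,y)>0$; connectedness means any two vertices are joined by a finite path of neighbors, and $d(x,y)$ is the combinatorial (path-length) distance; $r(x)=d(x_0,x)$. A phase function is $\theta\colon V\times V\to[-\pi,\pi]$ with $\theta(x,y)=-\theta(y,x)$. $\ell^2(V,\mu)$ is the space of $f\colon V\to\mathbb{C}$ with $\|f\|^2=\sum_x\mu(x)|f(x)|^2<\infty$, inner product $(f,g)=\sum_x\mu(x)f(x)\overline{g(x)}$. $B(x_0,n)=\{x: r(x)\leq n\}$ (plus edges between such vertices), $d_n=\max_{x\in B(x_0,n)}\deg(x)$, $p_n=\max_{x\in B(x_0,n)}\max_{y\in V}b(x,y)$. The Laplacian is $(\Delta\psi)(x)=\frac1{\mu(x)}\sum_y b(x,y)(\psi(x)-\psi(y))$.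 For $u,\psi\in C(V)$, $(P_\psi[u])(x)=\frac{1}{\mu(x)}\sum_{y\in V}b(x,y)(\psi(x)-\psi(y))(u(x)-e^{i\theta(x,y)}u(y))$. The cut-off is $\chi_n(x)=\left(\left(\frac{2n-d(x_0,x)}{n}\right)\vee 0\right)\wedge 1$, where $a\wedge z=\min\{a,z\}$, $a\vee z=\max\{a,z\}$. *)

(* Defs.v *)
From HB Require Import structures.
From mathcomp Require Import all_boot all_order all_algebra.
From mathcomp Require Import all_classical all_reals.
From mathcomp Require Import topology normedtype sequences esum trigo.
From mathcomp.real_closed Require Import complex.

Set Implicit Arguments.
Unset Strict Implicit.
Unset Printing Implicit Defensive.

Import Order.TTheory GRing.Theory Num.Theory.
Local Open Scope classical_set_scope.
Local Open Scope ring_scope.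
Local Open Scope complex_scope.

Section Graph.
Variables (R : realType) (V : choiceType).
Variables (b : V -> V -> R) (mu : V -> R) (theta : V -> V -> R).

Definition adj (x y : V) : Prop := 0 < b x y.

Definition nbrs (x : V) : set V := [set y | adj x y].
Definition deg (x : V) : nat := size (finmap.enum_fset (fset_set (nbrs x))).

Fixpoint walk (n : nat) (x y : V) : Prop :=
  match n with
  | 0 => x = y
  | n'.+1 => exists z, adj x z /\ walk n' z y
  end.

Definition connected_graph : Prop := forall x y, exists n, walk n x y.

(* combinatorial distance: the least length of a path from x to y
   (meaningful when the graph is connected) *)
Definition gdist (x y : V) : nat :=
  xget 0%N [set n | walk n x y /\ forall m, walk m x y -> (n <= m)%N].

Definition ball_g (x0 : V) (n : nat) : set V := [set x | (gdist x0 x <= n)%N].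

(* d_n = max_{x in B(x0,n)} deg x ;  p_n = max_{x in B(x0,n), y in V} b(x,y)
   (the sets are finite and nonempty, so sup = max) *)
Definition dmax (x0 : V) (n : nat) : R :=
  sup [set (deg x)%:R | x in ball_g x0 n].
Definition pmax (x0 : V) (n : nat) : R :=
  sup [set b x y | x in ball_g x0 n & y in [set: V]].

Definition chi (x0 : V) (n : nat) (x : V) : R :=
  Num.min (Num.max (((2 * n)%:R - (gdist x0 x)%:R) / n%:R) 0) 1.

Definition lap (psi : V -> R) (x : V) : R :=
  (mu x)^-1 * \sum_(y \in [set: V]) b x y * (psi x - psi y).

Definition expi (t : R) : R[i] := (cos t +i* sin t)%C.

Definition Pop (psi : V -> R) (u : V -> R[i]) (x : V) : R[i] :=
  ((mu x)^-1)%:C * \sum_(y \in [set: V])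
     ((b x y * (psi x - psi y))%:C * (u x - expi (theta x y) * u y)).

(* squared l^2(V,mu) norm, as an extended real (+oo if f not in l^2) *)
Definition l2sq (f : V -> R[i]) : \bar R :=
  (\esum_(x in [set: V]) (mu x * (Normc.normc (f x)) ^+ 2)%:E)%E.

Definition l2norm (f : V -> R[i]) : \bar R :=
  match l2sq f with
  | r%:E => (Num.sqrt r)%:E
  | _ => +oo%E
  end.

End Graph.

(* Main.v *)
Require Import Defs.
From HB Require Import structures.
From mathcomp Require Import all_boot all_order all_algebra.
From mathcomp Require Import all_classical all_reals.
From mathcomp Require Import topology normedtype sequences esum trigo.
From mathcomp.real_closed Require Import complex.
From mathcomp Require Import ring lra zify.

Import Order.TTheory GRing.Theory Num.Theory.
Local Open Scope classical_set_scope.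
Local Open Scope ring_scope.
Local Open Scope complex_scope.

Lemma walk_snoc {R : realType} {V : choiceType} {b : V -> V -> R} {m a x y} :
  walk b m a x -> adj b x y -> walk b m.+1 a y.
Proof.
elim: m a => [|m IH] a /=; first by move=> -> h; exists y.
by move=> [z [az wz]] h; exists z; split => //; apply: IH.
Qed.

Lemma walk_last {R : realType} {V : choiceType} {b : V -> V -> R} {m a c} :
  walk b m.+1 a c -> exists z, walk b m a z /\ adj b z c.
Proof.
elim: m a => [|m IH] a /=; first by move=> [z [az <-]]; exists a.
move=> [z [az wz]]; have [w [wzw wc]] := IH _ wz.
by exists w; split => //; exists z.
Qed.

Lemma gdist_spec {R : realType} {V : choiceType} {b : V -> V -> R} {x y} :
  (exists n, walk b n x y) ->
  walk b (gdist b x y) x y /\ forall m, walk b m x y -> (gdist b x y <= m)%N.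
Proof.
move=> ex.
have ex' : exists n, `[< walk b n x y >] by case: ex => n h; exists n; apply/asboolP.
have H : exists n, (fun n => walk b n x y /\ forall m, walk b m x y -> (n <= m)%N) n.
  exists (ex_minn ex'); case: ex_minnP => n /asboolP wn hmin; split => // m wm.
  by apply: hmin; apply/asboolP.
exact: (xgetPex 0%N H).
Qed.

Lemma gdist_adj {R : realType} {V : choiceType} {b : V -> V -> R} x0 y z :
  connected_graph b -> adj b y z -> (gdist b x0 z <= (gdist b x0 y).+1)%N.
Proof.
move=> con hyz; have [w _] := gdist_spec (con x0 y).
have [_ m] := gdist_spec (con x0 z); apply: m; exact: walk_snoc w hyz.
Qed.

Lemma ball_finite {R : realType} {V : choiceType} {b : V -> V -> R} x0 k :
  connected_graph b -> (forall x, finite_set (nbrs b x)) ->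
  finite_set (ball_g b x0 k).
Proof.
move=> con fin; elim: k => [|k IH].
  apply: (sub_finite_set (B := [set x0])); last exact: finite_set1.
  move=> x; rewrite /ball_g /= leqn0 => /eqP h.
  by have [w _] := gdist_spec (con x0 x); rewrite h in w.
apply: (sub_finite_set (B := ball_g b x0 k `|` \bigcup_(z in ball_g b x0 k) nbrs b z)).
  move=> x; rewrite /ball_g /= leq_eqVlt ltnS => /orP[/eqP h|h]; last by left.
  right; have [w _] := gdist_spec (con x0 x); rewrite h in w.
  have [z [wz azx]] := walk_last w.
  exists z => //; rewrite /=; have [_ m] := gdist_spec (con x0 z); exact: m.
rewrite finite_setU; split => //; apply: bigcup_finite => //.
Qed.



Lemma clamp_cases {R : realType} (s : R) :
  (Num.min (Num.max s 0) 1 = 0 /\ s <= 0) \/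
  (Num.min (Num.max s 0) 1 = s /\ 0 <= s /\ s <= 1) \/
  (Num.min (Num.max s 0) 1 = 1 /\ 1 <= s).
Proof.
have [hs|hs] := leP s 0.
  by left; split => //; have [h|h] := leP 0 1 => //; lra.
have [hs1|hs1] := leP s 1.
  by right; left; split => //; lra.
by right; right; split => //; lra.
Qed.

Lemma clamp_lip {R : realType} (s t : R) :
  `|Num.min (Num.max s 0) 1 - Num.min (Num.max t 0) 1| <= `|s - t|.
Proof.
have h1 := ler_norm (s - t); have h2 := ler_norm (t - s); rewrite distrC in h2.
move: h1 h2; set N := `|s - t| => h1 h2.
have [[-> hs]|[[-> [hs hs']]|[-> hs]]] := clamp_cases s;
have [[-> ht]|[[-> [ht ht']]|[-> ht]]] := clamp_cases t;
rewrite ler_norml; apply/andP; split; lra.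
Qed.

Lemma chi_out {R : realType} {V : choiceType} (b : V -> V -> R) x0 n x :
  (0 < n)%N -> (2 * n <= gdist b x0 x)%N -> chi b x0 n x = 0.
Proof.
move=> n0 h; rewrite /chi.
have hs : ((2 * n)%:R - (gdist b x0 x)%:R) / n%:R <= 0 :> R.
  apply: mulr_le0_ge0; last by rewrite invr_ge0 ler0n.
  by rewrite subr_le0 ler_nat.
have [[-> _]|[[-> [h1 h2]]|[-> h1]]] := clamp_cases (((2 * n)%:R - (gdist b x0 x)%:R) / n%:R : R) => //.
  by apply/eqP; rewrite eq_le hs h1.
by have := le_trans h1 hs; rewrite ler10.
Qed.

Lemma chi_lip {R : realType} {V : choiceType} (b : V -> V -> R) x0 n x y :
  (0 < n)%N -> connected_graph b -> (forall x y, b x y = b y x) -> adj b x y ->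
  `|chi b x0 n x - chi b x0 n y| <= n%:R^-1.
Proof.
move=> n0 con sym hxy; rewrite /chi; apply: le_trans (clamp_lip _ _) _.
have hyx : adj b y x by rewrite /adj sym.
have d1 := gdist_adj x0 _ _ con hxy; have d2 := gdist_adj x0 _ _ con hyx.
move: d1 d2; set dx := gdist b x0 x; set dy := gdist b x0 y => d1 d2.
have e1 : (dy%:R : R) <= dx%:R + 1 by rewrite -[1]/(1%:R) -natrD ler_nat addn1.
have e2 : (dx%:R : R) <= dy%:R + 1 by rewrite -[1]/(1%:R) -natrD ler_nat addn1.
have np : (0 : R) < n%:R by rewrite ltr0n.
rewrite -mulrBl normrM [`|n%:R^-1|]gtr0_norm ?invr_gt0 //.
rewrite -[X in _ <= X]mul1r ler_pM2r ?invr_gt0 //.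
rewrite ler_norml; apply/andP; split; lra.
Qed.


Lemma w_supp {R : realType} {V : choiceType} (b : V -> V -> R) x0 n x y :
  (0 < n)%N -> connected_graph b -> (forall x y, b x y = b y x) ->
  (forall x y, 0 <= b x y) ->
  b x y * (chi b x0 n x - chi b x0 n y) != 0 ->
  [/\ adj b x y, ball_g b x0 (2 * n) x & ball_g b x0 (2 * n) y].
Proof.
move=> n0 con sym b0; rewrite mulf_eq0 negb_or => /andP[bn cn].
have hxy : adj b x y by rewrite /adj lt_def bn b0.
have hyx : adj b y x by rewrite /adj sym.
have d1 := gdist_adj x0 _ _ con hxy; have d2 := gdist_adj x0 _ _ con hyx.
rewrite /ball_g /=; split => //.
  case: (leqP (gdist b x0 x) (2 * n)) => // h.
  rewrite chi_out // ?chi_out // ?subrr ?eqxx in cn; lia.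
case: (leqP (gdist b x0 y) (2 * n)) => // h.
rewrite chi_out // ?chi_out // ?subrr ?eqxx in cn; lia.
Qed.



Lemma normc_ge0 {R : realType} (z : R[i]) : 0 <= Normc.normc z.
Proof. by case: z => a b; rewrite /Normc.normc sqrtr_ge0. Qed.

Lemma normc_real {R : realType} (c : R) : Normc.normc (c%:C) = `|c|.
Proof. by rewrite /Normc.normc /= expr0n /= addr0 sqrtr_sqr. Qed.

Lemma normc_expi {R : realType} (t : R) : Normc.normc (expi t) = 1.
Proof. by rewrite /expi /Normc.normc cos2Dsin2 sqrtr1. Qed.

Lemma normcM' {R : realType} (x y : R[i]) :
  Normc.normc (x * y) = Normc.normc x * Normc.normc y.
Proof. exact: Normc.normcM. Qed.

Lemma normcD' {R : realType} (x y : R[i]) :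
  Normc.normc (x + y) <= Normc.normc x + Normc.normc y.
Proof. exact: (@le_normcD R x y). Qed.

Lemma normcB' {R : realType} (x y : R[i]) :
  Normc.normc (x - y) <= Normc.normc x + Normc.normc y.
Proof. by apply: le_trans (normcD' _ _) _; rewrite (@normcN R y). Qed.

Lemma normc_sum {R : realType} {I : Type} (s : seq I) (F : I -> R[i]) :
  Normc.normc (\sum_(i <- s) F i) <= \sum_(i <- s) Normc.normc (F i).
Proof.
elim: s => [|a s IH]; first by rewrite !big_nil Normc.normc0.
rewrite !big_cons; apply: le_trans (normcD' _ _) _; exact: lerD.
Qed.


Lemma cs_weighted {R : realFieldType} {I : Type} (s : seq I) (al v : I -> R) :
  (forall y, 0 <= al y) ->
  (\sum_(y <- s) al y * v y) ^+ 2 <=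
  (\sum_(y <- s) al y) * \sum_(y <- s) al y * v y ^+ 2.
Proof.
move=> a0.
have E1 : (\sum_(y <- s) al y * v y) ^+ 2 =
   \sum_(y <- s) \sum_(z <- s) (al y * al z) * (v y * v z).
  rewrite expr2 big_distrl /=; apply: eq_bigr => y _.
  rewrite big_distrr /=; apply: eq_bigr => z _; ring.
have E2 : (\sum_(y <- s) al y) * \sum_(y <- s) al y * v y ^+ 2 =
   \sum_(y <- s) \sum_(z <- s) (al y * al z) * v z ^+ 2.
  rewrite big_distrl /=; apply: eq_bigr => y _.
  rewrite big_distrr /=; apply: eq_bigr => z _; ring.
have E3 : (\sum_(y <- s) al y) * \sum_(y <- s) al y * v y ^+ 2 =
   \sum_(y <- s) \sum_(z <- s) (al y * al z) * v y ^+ 2.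
  rewrite mulrC big_distrl /=; apply: eq_bigr => y _.
  rewrite big_distrr /=; apply: eq_bigr => z _; ring.
rewrite E1.
have -> : (\sum_(y <- s) al y) * \sum_(y <- s) al y * v y ^+ 2 =
  \sum_(y <- s) \sum_(z <- s) (al y * al z) * ((v y ^+ 2 + v z ^+ 2) / 2).
  have -> : (\sum_(y <- s) al y) * \sum_(y <- s) al y * v y ^+ 2 =
     ((\sum_(y <- s) al y) * \sum_(y <- s) al y * v y ^+ 2 +
      (\sum_(y <- s) al y) * \sum_(y <- s) al y * v y ^+ 2) / 2.
    by field.
  rewrite {1}E3 E2 -big_split /= big_distrl /=; apply: eq_bigr => y _.
  rewrite -big_split /= big_distrl /=; apply: eq_bigr => z _; by field.
apply: ler_sum => y _; apply: ler_sum => z _.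
apply: ler_wpM2l; first by rewrite mulr_ge0.
have := sqr_ge0 (v y - v z); rewrite sqrrB => h.
rewrite ler_pdivlMr ?ltr0n //; lra.
Qed.

Lemma key_ineq {R : realFieldType} {I : Type} (s : seq I) (a : I -> I -> bool)
    (m f g : I -> R) (m0 e D : R) :
  0 < m0 -> (forall x, m0 <= m x) -> 0 <= e -> 0 <= D ->
  (forall x y, a x y = a y x) ->
  (forall x, \sum_(y <- s) (a x y)%:R <= D) ->
  (forall x, 0 <= f x) -> (forall x, 0 <= g x) ->
  (forall x, g x <= (m x)^-1 * e * \sum_(y <- s) (a x y)%:R * (f x + f y)) ->
  \sum_(x <- s) m x * g x ^+ 2 <= (2 * (D * e / m0)) ^+ 2 * \sum_(x <- s) m x * f x ^+ 2.
Proof.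
move=> m0p m0m e0 D0 asym aD f0 g0 gle.
have mp x : 0 < m x by exact: lt_le_trans m0p (m0m x).
have al0 x y : 0 <= (a x y)%:R :> R by rewrite ler0n.
have step x : m x * g x ^+ 2 <=
    m0^-1 * (e ^+ 2 * (2 * D)) * \sum_(y <- s) (a x y)%:R * (f x ^+ 2 + f y ^+ 2).
  have S0 : 0 <= \sum_(y <- s) (a x y)%:R * (f x + f y).
    by apply: sumr_ge0 => y _; rewrite mulr_ge0 ?addr_ge0.
  have h1 : g x ^+ 2 <= ((m x)^-1 * e) ^+ 2 * (\sum_(y <- s) (a x y)%:R * (f x + f y)) ^+ 2.
    rewrite -exprMn; apply: lerXn2r; rewrite ?inE ?nnegrE ?mulr_ge0 ?invr_ge0 ?(ltW (mp x)) //.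
  have h2 := cs_weighted s (fun y => (a x y)%:R) (fun y => f x + f y) (al0 x).
  have h3 : \sum_(y <- s) (a x y)%:R * (f x + f y) ^+ 2 <=
            2 * \sum_(y <- s) (a x y)%:R * (f x ^+ 2 + f y ^+ 2).
    rewrite big_distrr /=; apply: ler_sum => y _.
    have := sqr_ge0 (f x - f y); have := al0 x y; rewrite sqrrB sqrrD; nra.
  have T0 : 0 <= \sum_(y <- s) (a x y)%:R * (f x ^+ 2 + f y ^+ 2).
    by apply: sumr_ge0 => y _; rewrite mulr_ge0 ?addr_ge0 ?sqr_ge0.
  have T1 : 0 <= \sum_(y <- s) (a x y)%:R * (f x + f y) ^+ 2.
    by apply: sumr_ge0 => y _; rewrite mulr_ge0 ?sqr_ge0.
  have h4 : (\sum_(y <- s) (a x y)%:R * (f x + f y)) ^+ 2 <=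
            D * (2 * \sum_(y <- s) (a x y)%:R * (f x ^+ 2 + f y ^+ 2)).
    apply: le_trans h2 _; apply: le_trans (ler_wpM2r T1 (aD x)) _.
    exact: ler_wpM2l.
  set T := \sum_(y <- s) _ * (f x ^+ 2 + f y ^+ 2) in T0 h3 h4 *.
  have mx := mp x.
  apply: le_trans (ler_wpM2l (ltW mx) (le_trans h1 (ler_wpM2l (sqr_ge0 _) h4))) _.
  have -> : m x * (((m x)^-1 * e) ^+ 2 * (D * (2 * T))) =
            (m x)^-1 * (e ^+ 2 * (2 * D)) * T.
    by field; rewrite gt_eqF.
  apply: ler_wpM2r => //; apply: ler_wpM2r; first by rewrite mulr_ge0 ?sqr_ge0 ?mulr_ge0.
  by rewrite lef_pV2 ?posrE.
apply: le_trans (ler_sum _ (fun x _ => step x)) _.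
rewrite -big_distrr /=.
have dbl : \sum_(x <- s) \sum_(y <- s) (a x y)%:R * (f x ^+ 2 + f y ^+ 2) <=
           2 * D * \sum_(x <- s) f x ^+ 2.
  have -> : \sum_(x <- s) \sum_(y <- s) (a x y)%:R * (f x ^+ 2 + f y ^+ 2) =
     \sum_(x <- s) \sum_(y <- s) (a x y)%:R * f x ^+ 2 +
     \sum_(x <- s) \sum_(y <- s) (a x y)%:R * f y ^+ 2.
    rewrite -big_split /=; apply: eq_bigr => x _.
    by rewrite -big_split /=; apply: eq_bigr => y _; ring.
  rewrite [X in _ + X <= _]exchange_big /= -big_split /= big_distrr /=.
  apply: ler_sum => x _.
  have e1 : \sum_(y <- s) (a x y)%:R * f x ^+ 2 = (\sum_(y <- s) (a x y)%:R) * f x ^+ 2.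
    by rewrite big_distrl.
  have e2 : \sum_(y <- s) (a y x)%:R * f x ^+ 2 = (\sum_(y <- s) (a x y)%:R) * f x ^+ 2.
    by rewrite big_distrl; apply: eq_bigr => y _; rewrite asym.
  rewrite e1 e2; have := aD x; have := sqr_ge0 (f x); nra.
have fm : \sum_(x <- s) f x ^+ 2 <= m0^-1 * \sum_(x <- s) m x * f x ^+ 2.
  rewrite big_distrr /=; apply: ler_sum => x _.
  rewrite ler_pdivlMl // ; apply: ler_wpM2r; [exact: sqr_ge0|exact: m0m].
have P0 : 0 <= m0^-1 * (e ^+ 2 * (2 * D)).
  by rewrite mulr_ge0 ?invr_ge0 ?(ltW m0p) // mulr_ge0 ?sqr_ge0 // mulr_ge0.
apply: le_trans (ler_wpM2l P0 dbl) _.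
have Q0 : 0 <= 2 * D by rewrite mulr_ge0.
have h := ler_wpM2l Q0 fm.
apply: le_trans (ler_wpM2l P0 h) _.
by rewrite le_eqVlt; apply/orP; left; apply/eqP; field; rewrite gt_eqF.
Qed.



From mathcomp Require Import finmap.

Lemma finite_has_ub {R : realType} (E : set R) : finite_set E -> has_ubound E.
Proof.
move=> fin; exists (\sum_(x <- fset_set E) `|x|) => x Ex.
have xin : x \in fset_set E by rewrite in_fset_set //; apply: mem_set.
rewrite (bigD1_seq x xin (fset_uniq _)) /=.
apply: le_trans (ler_norm x) _; rewrite lerDl; exact: sumr_ge0.
Qed.

Lemma sum_bool {R : realType} {I : Type} (s : seq I) (a : pred I) :
  \sum_(y <- s) (a y)%:R = (count a s)%:R :> R.
Proof.
elim: s => [|z s IH]; first by rewrite big_nil.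
by rewrite big_cons IH /= natrD.
Qed.

Lemma l2_fin {R : realType} {V : choiceType} (mu : V -> R) (F u : V -> R[i])
    (B : set V) (c : R) :
  finite_set B -> 0 <= c -> (forall x, 0 < mu x) ->
  (forall x, ~ B x -> Normc.normc (F x) = 0) ->
  \sum_(x <- fset_set B) mu x * Normc.normc (F x) ^+ 2 <=
    c ^+ 2 * \sum_(x <- fset_set B) mu x * Normc.normc (u x) ^+ 2 ->
  (l2sq mu u < +oo)%E ->
  (l2norm mu F <= c%:E * l2norm mu u)%E.
Proof.
move=> Bfin c0 mu0 Fz hle ufin.
have hB (G : V -> R[i]) : (\sum_(x \in B) (mu x * Normc.normc (G x) ^+ 2)%:E)%E =
    (\sum_(x <- fset_set B) mu x * Normc.normc (G x) ^+ 2)%:E.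
  by rewrite fsbig_finite // sumEFin.
have hF : l2sq mu F = (\sum_(x <- fset_set B) mu x * Normc.normc (F x) ^+ 2)%:E.
  rewrite /l2sq -hB -esum_fset //; last first.
    by move=> i _; rewrite lee_fin mulr_ge0 ?sqr_ge0 // ltW.
  rewrite [in RHS]esum_mkcond; apply: eq_esum => x _.
  case: ifPn => // /negP xB; rewrite Fz ?expr0n /= ?mulr0 //.
  by move=> Bx; apply: xB; apply: mem_set.
have hu : ((\sum_(x <- fset_set B) mu x * Normc.normc (u x) ^+ 2)%:E <= l2sq mu u)%E.
  rewrite -hB; apply: esum_ge; exists B => //; split => //.
have u0 : (0 <= l2sq mu u)%E.
  by apply: esum_ge0 => x _; rewrite lee_fin mulr_ge0 ?sqr_ge0 // ltW.
rewrite /l2norm hF; move: ufin hu u0; case: (l2sq mu u) => [r| |] //= _ hu u0.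
rewrite lee_fin in hu; rewrite lee_fin in u0.
rewrite -EFinM lee_fin.
rewrite -(ger0_norm c0) -sqrtr_sqr -sqrtrM ?sqr_ge0 // ler_sqrt; last first.
  by rewrite mulr_ge0 ?sqr_ge0.
apply: le_trans hle _; apply: ler_wpM2l; first exact: sqr_ge0.
exact: hu.
Qed.



Lemma beta_aux {R : realType} (D P m0 N : R) : m0 != 0 -> N != 0 ->
  D * P / (m0 * N) = D * (P / N) / m0.
Proof. by move=> h1 h2; field; rewrite h1 h2. Qed.

Theorem lemma5p2 (R : realType) (V : choiceType)
  (b : V -> V -> R) (mu : V -> R) (theta : V -> V -> R) (mu0 : R)
  (x0 : V) (n : nat) (u : V -> R[i]) :
  (* V countably infinite *)
  countable [set: V] -> infinite_set [set: V] ->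
  (* weighted graph *)
  (forall x, 0 < mu x) ->
  (forall x y, 0 <= b x y) ->
  (forall x y, b x y = b y x) ->
  (forall x, b x x = 0) ->
  (forall x, finite_set (nbrs b x)) ->
  connected_graph b ->
  (* mu >= mu0 > 0 *)
  0 < mu0 -> (forall x, mu0 <= mu x) ->
  (* phase function *)
  (forall x y, - pi <= theta x y <= pi) ->
  (forall x y, theta x y = - theta y x) ->
  (0 < n)%N ->
  (* u in l^2(V, mu) *)
  (l2sq mu u < +oo)%E ->
  let beta := dmax b x0 (2 * n) * pmax b x0 (2 * n) / (mu0 * n%:R) in
  (l2norm mu (Pop b mu theta (chi b x0 n) u) <= (2 * beta)%:E * l2norm mu u)%E /\
  (l2norm mu (fun x => (u x * (lap b mu (chi b x0 n) x)%:C)%R) <= beta%:E * l2norm mu u)%E.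
Proof.
move=> _ _ mupos b0 sym bxx fin con mu0p mu0le _ _ n0 ufin beta.
set B := ball_g b x0 (2 * n).
have Bfin : finite_set B by exact: ball_finite.
have Bx0 : B x0.
  rewrite /B /ball_g /=; have [_ m] := gdist_spec (con x0 x0); exact: leq_trans (m 0%N erefl) _.
set D := dmax b x0 (2 * n).
set P := pmax b x0 (2 * n).
have degD x : B x -> (deg b x)%:R <= D.
  move=> Bx; apply: ub_le_sup; last by exists x.
  by apply: finite_has_ub; apply: finite_image.
have bP x y : B x -> b x y <= P.
  move=> Bx; apply: ub_le_sup; last by exists x => //; exists y.
  apply: finite_has_ub; apply: (sub_finite_set (B := [set 0] `|` \bigcup_(z in B) (b z @` nbrs b z))).
    move=> r [z Bz [w _ <-]]; have [h|h] := boolP (0 < b z w).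
      by right; exists z => //; exists w.
    by left; apply/eqP; rewrite eq_le (b0 z w) andbT leNgt.
  rewrite finite_setU; split; first exact: finite_set1.
  by apply: bigcup_finite => // z _; apply: finite_image.
have D0 : 0 <= D by apply: le_trans (degD x0 Bx0); rewrite ler0n.
have P0 : 0 <= P by rewrite -(bxx x0); apply: bP.
have np : (0 : R) < n%:R by rewrite ltr0n.
set w := fun x y => b x y * (chi b x0 n x - chi b x0 n y).
set a := fun x y => w x y != 0.
set e := P / n%:R.
have e0 : 0 <= e by rewrite divr_ge0 // ltW.
have asym x y : a x y = a y x.
  by rewrite /a /w sym -oppr_eq0 -mulrN opprB.
have wle x y : `|w x y| <= (a x y)%:R * e.
  rewrite /a; case: eqP => [->|/eqP h]; first by rewrite normr0 mul0r.
  have [hxy Bx By] := w_supp b x0 n _ _ n0 con sym b0 h.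
  rewrite mul1r /w normrM ger0_norm //; apply: ler_pM => //.
    exact: bP.
  exact: chi_lip.
have aB x y : a x y -> B x /\ B y.
  by move=> h; have [] := w_supp b x0 n _ _ n0 con sym b0 h.
have aD x : \sum_(y <- fset_set B) (a x y)%:R <= D.
  rewrite (sum_bool _ (a x)).
  have [Bx|nBx] := pselect (B x); last first.
    rewrite (_ : count _ _ = 0%N) //; apply/eqP; rewrite -leqn0 leqNgt -has_count.
    by apply/hasP => -[y _ /aB []].
  apply: le_trans (degD x Bx); rewrite ler_nat -size_filter.
  apply: uniq_leq_size; first by rewrite filter_uniq // fset_uniq.
  move=> y; rewrite mem_filter => /andP[axy _].
  rewrite in_fset_set //; apply: mem_set.
  have [hxy _ _] := w_supp b x0 n _ _ n0 con sym b0 axy; exact: hxy.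
have sumB x (G : V -> R[i]) : (forall y, w x y = 0 -> G y = 0) ->
    \sum_(y \in [set: V]) G y = \sum_(y <- fset_set B) G y.
  move=> Gz; rewrite -(fsbig_widen B setT) //; first by rewrite fsbig_finite.
  move=> y [_ nBy] /=; apply: Gz; apply/eqP; apply: contraT => h.
  by have [] := aB x y h.
have sumBr x (G : V -> R) : (forall y, w x y = 0 -> G y = 0) ->
    \sum_(y \in [set: V]) G y = \sum_(y <- fset_set B) G y.
  move=> Gz; rewrite -(fsbig_widen B setT) //; first by rewrite fsbig_finite.
  move=> y [_ nBy] /=; apply: Gz; apply/eqP; apply: contraT => h.
  by have [] := aB x y h.
have betaE : beta = D * e / mu0.
  by rewrite /beta /e -/D -/P beta_aux // gt_eqF.
have beta0 : 0 <= beta.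
  by rewrite betaE; apply: divr_ge0; [rewrite mulr_ge0|exact: ltW].
have muinv x : 0 <= (mu x)^-1 by rewrite invr_ge0; exact: ltW.
have nBa x y : ~ B x -> a x y = false.
  by move=> nBx; apply: negbTE; apply/negP => h; have [] := aB x y h.
split.
- set g := fun x => Normc.normc (Pop b mu theta (chi b x0 n) u x).
  set f := fun x => Normc.normc (u x).
  have gle x : g x <= (mu x)^-1 * e * \sum_(y <- fset_set B) (a x y)%:R * (f x + f y).
    rewrite /g /Pop (sumB x); last first.
      by move=> y h; rewrite /w in h; rewrite h mul0r.
    rewrite normcM' normc_real ger0_norm ?muinv //.
    rewrite -mulrA; apply: ler_wpM2l; first by rewrite invr_ge0 ltW.
    apply: le_trans (normc_sum _ _) _.
    rewrite big_distrr /=; apply: ler_sum => y _.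
    rewrite normcM' normc_real.
    apply: le_trans (ler_wpM2l (normr_ge0 _) (normcB' _ _)) _.
    rewrite normcM' normc_expi mul1r.
    rewrite mulrA [e * _]mulrC; apply: ler_wpM2r; first by rewrite addr_ge0 ?normc_ge0.
    exact: wle.
  have g0 x : 0 <= g x by apply: normc_ge0.
  apply: (l2_fin mu _ u B) => //.
  + by rewrite mulr_ge0.
  + move=> x nBx; apply/eqP; rewrite eq_le g0 andbT.
    apply: le_trans (gle x) _; rewrite big1 ?mulr0 // => y _.
    by rewrite nBa // mul0r.
  + rewrite [2 * beta]mulrC.
    have := key_ineq (fset_set B) a mu f g mu0 e D mu0p mu0le e0 D0 asym aD
      (fun x => normc_ge0 _) g0 gle.
    by rewrite betaE [_ * 2]mulrC.
- set f := fun x => Normc.normc (u x).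
  have lapB x : `|lap b mu (chi b x0 n) x| <= (mu x)^-1 * e * \sum_(y <- fset_set B) (a x y)%:R.
    rewrite /lap (sumBr x); last by move=> y h; rewrite /w in h; rewrite h.
    rewrite normrM ger0_norm ?muinv // -mulrA; apply: ler_wpM2l; first by rewrite invr_ge0 ltW.
    apply: le_trans (ler_norm_sum _ _ _) _.
    rewrite big_distrr /=; apply: ler_sum => y _; rewrite [e * _]mulrC; exact: wle.
  have lapb x : `|lap b mu (chi b x0 n) x| <= beta.
    apply: le_trans (lapB x) _; rewrite betaE -mulrA mulrC.
    apply: ler_pM.
    - by rewrite mulr_ge0 // sumr_ge0 // => y _; rewrite ler0n.
    - exact: muinv.
    - by rewrite [D * e]mulrC; apply: ler_wpM2l => //; exact: aD.
    - by rewrite lef_pV2 ?posrE.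
  apply: (l2_fin mu _ u B) => //.
  + move=> x nBx; rewrite normcM' normc_real.
    have -> : lap b mu (chi b x0 n) x = 0.
      apply/eqP; rewrite -normr_le0; apply: le_trans (lapB x) _.
      by rewrite big1 ?mulr0 // => y _; rewrite nBa.
    by rewrite normr0 mulr0.
  + rewrite big_distrr /=; apply: ler_sum => x _.
    rewrite normcM' normc_real exprMn [in X in X <= _]mulrA [beta ^+ 2 * _]mulrC.
    apply: ler_wpM2l; first by rewrite mulr_ge0 ?sqr_ge0 // ltW.
    apply: lerXn2r; rewrite ?inE ?nnegrE //; exact: lapb.
Qed.
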